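(* Let $d\ge 1$ and let $P\subset\mathbb{R}^d$ be a finite set of $n\ge 1$ points. Then there exists $p\in P$ such that $p\in K$ for every skyline $K$ with $|K\cap P|>(1-\frac{1}{2d-1})n$.
   Context: A skyline in $\mathbb{R}^d$ is a set of the form $\{x\in\mathbb{R}^d: a_j\le x_j\le b_j \text{ for } 1\le j\le d-1,\ x_d\le b_d\}$ with real numbers $a_j\le b_j$ ($1\le j\le d-1$) and $b_d$; i.e., an axis-parallel box that is unbounded in the direction of the negative $x_d$-axis. *)

(* Defs.v *)
(* Points of R^d are row vectors 'rV[R]_d over an arbitrary
   real field R (the statement is purely order-theoretic/linear). *)
From HB Require Import structures.
From mathcomp Require Import all_boot all_order all_algebra.
Set Implicit Arguments. Unset Strict Implicit. Unset Printing Implicit Defensive.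
Import Order.TTheory GRing.Theory Num.Theory.
Local Open Scope ring_scope.

(* The skyline with parameters a, b : 'rV_d (a_j <= b_j for j < d-1, a_{d-1}
   irrelevant): { x | a_j <= x_j <= b_j for j <> d-1 (0-based), x_{d-1} <= b_{d-1} }. *)
Definition skyline (R : realFieldType) (d : nat) (a b : 'rV[R]_d) : pred 'rV[R]_d :=
  fun x => [forall j : 'I_d,
     if (val j == d.-1)%N then x 0 j <= b 0 j
     else (a 0 j <= x 0 j) && (x 0 j <= b 0 j)].

Definition skyline_params (R : realFieldType) (d : nat) (a b : 'rV[R]_d) : Prop :=
  forall j : 'I_d, (val j != d.-1)%N -> a 0 j <= b 0 j.

(* Main.v *)
Require Import Defs.
From HB Require Import structures.
From mathcomp Require Import all_boot all_order all_algebra.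
From mathcomp Require Import zify ring lra.
Import Order.TTheory GRing.Theory Num.Theory.
Local Open Scope ring_scope.

Lemma argmax_seq {R : realFieldType} {T : eqType} (s : seq T) (f : T -> R) :
  s != [::] -> exists2 x, x \in s & forall y, y \in s -> f y <= f x.
Proof.
elim: s => [//|x s IH] _.
case: (eqVneq s [::]) => [->|sne].
  by exists x; rewrite ?mem_seq1 // => y; rewrite mem_seq1 => /eqP ->.
have [z zs zmax] := IH sne.
case: (leP (f x) (f z)) => hxz.
- exists z; first by rewrite in_cons zs orbT.
  move=> y; rewrite in_cons => /orP [/eqP -> //|]; exact: zmax.
- exists x; first by rewrite in_cons eqxx.
  move=> y; rewrite in_cons => /orP [/eqP -> //|ys].
  by apply: le_trans (zmax _ ys) _; apply: ltW.
Qed.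

Definition cnt {R : realFieldType} {T : eqType} (P : seq T) (f : T -> R) (p : T) :=
  count (fun q => f q <= f p) P.

Lemma bad_small {R : realFieldType} {T : eqType} (P : seq T) (f : T -> R) (m : nat) :
  (0 < size P)%N ->
  (count (fun p => cnt P f p * m < size P)%N P * m < size P)%N.
Proof.
move=> n0.
set bad := (fun p => _).
case: (boolP (has bad P)) => hb; last first.
  by rewrite has_count -eqn0Ngt in hb; rewrite (eqP hb).
have : filter bad P != [::] by rewrite -has_filter.
move=> /(@argmax_seq _ _ _ f) [p pS pmax].
rewrite mem_filter in pS; case/andP: pS => bp pP.
apply: leq_ltn_trans bp.
rewrite leq_mul2r; apply/orP; right.
have -> : count bad P = count (fun q => bad q && (f q <= f p)) P.
  apply: eq_in_count => q qP; case bq: (bad q) => //=; symmetry; apply: pmax.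
  by rewrite mem_filter bq qP.
by apply: sub_count => q /andP [].
Qed.

Lemma count_or {T : Type} (a b : pred T) (s : seq T) :
  (count (fun x => a x || b x) s <= count a s + count b s)%N.
Proof. by elim: s => //= x s IH; case: (a x); case: (b x) => /=; lia. Qed.

Lemma count_has_le {X T : Type} (P : seq T) (F : seq X) (B : X -> pred T) :
  (count (fun p => has (fun f => B f p) F) P <= sumn [seq count (B f) P | f <- F])%N.
Proof.
elim: F => [|f F IH] /=; first by elim: P.
apply: leq_trans (count_or (B f) (fun p => has (fun f => B f p) F) P) _.
by rewrite leq_add2l.
Qed.

Lemma sum_bound {X : Type} (F : seq X) (g : X -> nat) m n :
  (forall f, (g f * m < n)%N) -> (sumn [seq g f | f <- F] * m <= size F * n.-1)%N.
Proof.
move=> h; elim: F => [|f F IH] //=.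
have := h f; rewrite mulnDl mulSn; lia.
Qed.

Lemma miss {R : realFieldType} {T : eqType} (P : seq T) (f : T -> R) (K : pred T)
  (p : T) (m : nat) :
  (0 < m)%N -> ~~ (cnt P f p * m < size P)%N ->
  (forall q, f q <= f p -> ~~ K q) ->
  (1 - 1 / (m%:R : R)) * (size P)%:R < (count K P)%:R -> False.
Proof.
move=> m0 hc hK hlt.
have h1 : (count K P + cnt P f p <= size P)%N.
  rewrite -(count_predC K P) leq_add2l /cnt; apply: sub_count => q /=.
  exact: hK.
rewrite -leqNgt in hc.
have r1 : (count K P)%:R + (cnt P f p)%:R <= (size P)%:R :> R by rewrite -natrD ler_nat.
have r2 : (size P)%:R <= (cnt P f p)%:R * m%:R :> R by rewrite -natrM ler_nat.
have mpos : 0 < m%:R :> R by rewrite ltr0n.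
have r3 : (size P)%:R / m%:R <= (cnt P f p)%:R :> R by rewrite ler_pdivrMr.
have e : (1 - 1 / m%:R) * (size P)%:R = (size P)%:R - (size P)%:R / m%:R :> R.
  by field; rewrite pnatr_eq0 -lt0n.
rewrite e in hlt. lra.
Qed.

Theorem corollary2 (R : realFieldType) (d : nat) (P : seq 'rV[R]_d) :
  (1 <= d)%N -> uniq P -> (1 <= size P)%N ->
  exists2 p, p \in P &
    forall a b : 'rV[R]_d, skyline_params a b ->
      (1 - 1 / ((2 * d - 1)%N)%:R : R) * (size P)%:R < (count (skyline a b) P)%:R ->
      skyline a b p.
Proof.
case: d P => [//|d] P _ _ n0.
set m := (2 * d.+1 - 1)%N.
have m0 : (0 < m)%N by rewrite /m; lia.
pose F : seq ('rV[R]_d.+1 -> R) :=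
  [seq (fun x : 'rV[R]_d.+1 => - x 0 (inord i)) | i <- iota 0 d.+1] ++
  [seq (fun x : 'rV[R]_d.+1 => x 0 (inord i)) | i <- iota 0 d].
have sF : size F = m by rewrite size_cat !size_map !size_iota /m; lia.
pose B (f : 'rV[R]_d.+1 -> R) p := (cnt P f p * m < size P)%N.
have hc : (count (fun p => has (fun f => B f p) F) P < size P)%N.
  apply: leq_ltn_trans (count_has_le P F B) _.
  have := sum_bound F (fun f => count (B f) P) _ _ (fun f => bad_small P f m n0).
  rewrite sF; set s := sumn _ => h.
  move: n0 h; case: (size P) => [//|k] _ /= h.
  rewrite ltnS; apply: contraLR h; rewrite -!ltnNge => hk; nia.
have : has (predC (fun p => has (fun f => B f p) F)) P.
  rewrite has_count; have := count_predC (fun p => has (fun f => B f p) F) P.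
  move: hc; set c1 := count _ P; set c2 := count _ P.
  by move=> h1 h2; move: h1; rewrite -h2 -addn1 leq_add2l lt0n; apply: contraL => /eqP ->.
case/hasP => p pP hp0.
have hp : ~~ has (fun f => B f p) F := hp0.
rewrite has_cat !has_map negb_or in hp; case/andP: hp => hup hlow.
have hu : forall j : 'I_d.+1, ~~ B (fun x => - x 0 j) p.
  move=> j; rewrite -[j]inord_val. apply: (hasPn hup).
  by rewrite mem_iota /= add0n ltn_ord.
have hl : forall j : 'I_d.+1, (val j < d)%N -> ~~ B (fun x => x 0 j) p.
  move=> j hj; rewrite -[j]inord_val; apply: (hasPn hlow).
  by rewrite mem_iota /= add0n.
exists p => // a b _ hK.
apply/forallP => j.
case: ifP => hj.
- rewrite leNgt; apply/negP => hlt.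
  apply: (@miss _ _ P (fun x : 'rV[R]_d.+1 => - x 0 j) (skyline a b) p m m0 (hu j)) => //.
  move=> q /= hq; apply/negP => /forallP /(_ j); rewrite hj => hqb.
  by move: hq; rewrite lerN2 => hq; move: (lt_le_trans hlt (le_trans hq hqb)); rewrite ltxx.
- have jd : (val j < d)%N by rewrite ltn_neqAle hj -ltnS ltn_ord.
  apply/andP; split; rewrite leNgt; apply/negP => hlt.
  + apply: (@miss _ _ P (fun x : 'rV[R]_d.+1 => x 0 j) (skyline a b) p m m0 (hl j jd)) => //.
    move=> q /= hq; apply/negP => /forallP /(_ j); rewrite hj => /andP [h1 h2].
    by move: (lt_le_trans hlt (le_trans h1 hq)); rewrite ltxx.
  + apply: (@miss _ _ P (fun x : 'rV[R]_d.+1 => - x 0 j) (skyline a b) p m m0 (hu j)) => //.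
    move=> q /= hq; apply/negP => /forallP /(_ j); rewrite hj => /andP [h1 h2].
    by move: hq; rewrite lerN2 => hq; move: (lt_le_trans hlt (le_trans hq h2)); rewrite ltxx.
Qed.
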